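(* Let $X$ be a compact metric space and $f:X\to X$ a local homeomorphism. Suppose there is a full zip shift map $\sigma_\tau:\Sigma\to\Sigma$ and a homeomorphism $\phi:X\to\Sigma$ with $f=\phi^{-1}\circ\sigma_\tau\circ\phi$. Then $f$ is expansive.
   Context: Given finite nonempty alphabets $S,Z$ with $\#Z\le\#S$ and a surjection $\tau:S\to Z$, the zip shift space $\Sigma=\Sigma_{Z,S}$ is the set of bi-infinite sequences $x=(x_i)_{i\in\mathbb{Z}}$ with $x_i\in S$ for $i\ge0$ and $x_i\in Z$ for $i<0$, with metric $d(x,y)=2^{-M(x,y)}$, $M(x,y)=\min\{|i|:x_i\neq y_i\}$; the zip shift map is $(\sigma_\tau x)_i=x_{i+1}$ for $i\neq-1$, $(\sigma_\tau x)_{-1}=\tau(x_0)$. A local homeomorphism $f:X\to X$ of a compact metric space $(X,d_X)$ is expansive if there is $e>0$ such that for any $x\neq y$ in $X$ there exists $n\in\mathbb{Z}$ with $d_X(f^n(x),f^n(y))>e$, where for $n<0$, $f^n(x)$, $f^n(y)$ denote the sets of $|n|$-th preimages and the distance is the minimum distance between these sets. *)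

(* Defs.v *)
From Stdlib Require Import Reals ZArith List ClassicalDescription.
From mathcomp Require Import all_boot.

Set Implicit Arguments.
Unset Strict Implicit.
Unset Printing Implicit Defensive.

Local Open Scope R_scope.

Definition is_metric (X : Type) (d : X -> X -> R) : Prop :=
  (forall x y, 0 <= d x y) /\
  (forall x y, d x y = 0 <-> x = y) /\
  (forall x y, d x y = d y x) /\
  (forall x y z, d x z <= d x y + d y z).

Definition mopen (X : Type) (d : X -> X -> R) (U : X -> Prop) : Prop :=
  forall x, U x -> exists r, 0 < r /\ forall y, d x y < r -> U y.

Definition mcompact (X : Type) (d : X -> X -> R) : Prop :=
  forall (I : Type) (U : I -> X -> Prop),
    (forall i, mopen d (U i)) -> (forall x, exists i, U i x) ->
    exists l : list I, forall x, exists i, In i l /\ U i x.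

Definition mcont_on (X Y : Type) (dX : X -> X -> R) (dY : Y -> Y -> R)
  (A : X -> Prop) (g : X -> Y) : Prop :=
  forall x, A x -> forall eps, 0 < eps -> exists delta, 0 < delta /\
    forall y, A y -> dX x y < delta -> dY (g x) (g y) < eps.

Definition mcont (X Y : Type) (dX : X -> X -> R) (dY : Y -> Y -> R)
  (g : X -> Y) : Prop := mcont_on dX dY (fun _ => True) g.

Definition homeomorphism (X Y : Type) (dX : X -> X -> R) (dY : Y -> Y -> R)
  (phi : X -> Y) : Prop :=
  exists psi : Y -> X,
    (forall x, psi (phi x) = x) /\ (forall y, phi (psi y) = y) /\
    mcont dX dY phi /\ mcont dY dX psi.

Definition local_homeomorphism (X : Type) (d : X -> X -> R) (f : X -> X) : Prop :=
  forall x, exists (U V : X -> Prop) (g : X -> X),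
    mopen d U /\ mopen d V /\ U x /\
    (forall y, U y -> V (f y)) /\
    (forall y, U y -> g (f y) = y) /\
    (forall z, V z -> U (g z) /\ f (g z) = z) /\
    mcont_on d d U f /\ mcont_on d d V g.

(* For n >= 0 we compare f^n x and
   f^n y; for n < 0 we compare the sets of |n|-th preimages, the distance
   between sets being the infimum of pointwise distances:
   "dist(A,B) > e" iff there is e' > e with d a b >= e' for all a in A, b in B. *)
Definition iterate_dist_gt (X : Type) (d : X -> X -> R) (f : X -> X)
  (e : R) (n : Z) (x y : X) : Prop :=
  if (0 <=? n)%Z then d (iter (Z.to_nat n) f x) (iter (Z.to_nat n) f y) > e
  else exists e', e' > e /\
    forall a b, iter (Z.to_nat (- n)) f a = x ->
                iter (Z.to_nat (- n)) f b = y -> d a b >= e'.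

Definition expansive (X : Type) (d : X -> X -> R) (f : X -> X) : Prop :=
  exists e, 0 < e /\
    forall x y, x <> y -> exists n : Z, iterate_dist_gt d f e n x y.

(* A point x = (x_i)_{i in Z} of Sigma_{Z,S} is represented by the pair
   (xn, xp) with xp k = x_k (k >= 0, in S) and xn k = x_{-(k+1)} (in Z). *)
Definition zip_space (S Z : finType) : Type := ((nat -> Z) * (nat -> S))%type.

Definition zip_disagree (S Z : finType) (x y : zip_space S Z) : pred nat :=
  fun m => (x.2 m != y.2 m) || ((0 < m)%N && (x.1 m.-1 != y.1 m.-1)).

(* d(x,y) = 2^{-M(x,y)}, M(x,y) = min{|i| : x_i <> y_i}; d(x,x) = 0. *)
Definition zip_dist (S Z : finType) (x y : zip_space S Z) : R :=
  match excluded_middle_informative (exists m, zip_disagree x y m) with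
  | left h => (/ 2) ^ (ex_minn h)
  | right _ => 0
  end.

(* (sigma_tau x)_i = x_{i+1} for i <> -1, (sigma_tau x)_{-1} = tau(x_0). *)
Definition zip_shift (S Z : finType) (tau : S -> Z) (x : zip_space S Z)
  : zip_space S Z :=
  (fun k => match k with 0 => tau (x.2 0%N) | k'.+1 => x.1 k' end,
   fun k => x.2 k.+1).

(* Main.v *)
Require Import Defs.
From Stdlib Require Import Reals ZArith.
From mathcomp Require Import all_boot.
From Stdlib Require Import Lra Lia FunctionalExtensionality List ClassicalDescription.

Local Open Scope R_scope.

Lemma zip_dist_lt1 (S Z : finType) (u v : zip_space S Z) :
  zip_dist u v < 1 -> u.2 0%N = v.2 0%N.
Proof.
move=> H; apply/eqP; apply/negPn/negP => Hne.
move: H; rewrite /zip_dist.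
case: excluded_middle_informative => [h|hn].
- case: ex_minnP => m _ Hmin.
  have: (m <= 0)%N by apply: Hmin; rewrite /zip_disagree Hne.
  rewrite leqn0 => /eqP ->; simpl; lra.
- exfalso; apply: hn; exists 0%N; by rewrite /zip_disagree Hne.
Qed.

Lemma iter_shift2 (S Z : finType) (tau : S -> Z) k (u : zip_space S Z) j :
  (iter k (zip_shift tau) u).2 j = u.2 (j + k)%N.
Proof.
elim: k j => [|k IH] j /=; first by rewrite addn0.
by rewrite IH addnS.
Qed.

Lemma iter_shift1 (S Z : finType) (tau : S -> Z) k (u : zip_space S Z) j :
  (iter k (zip_shift tau) u).1 (j + k)%N = u.1 j.
Proof.
elim: k j => [|k IH] j /=; first by rewrite addn0.
by rewrite addnS /= IH.
Qed.

Lemma iter_shift_neg (S Z : finType) (tau : S -> Z) k (u : zip_space S Z) :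
  (iter k.+1 (zip_shift tau) u).1 k = tau (u.2 0%N).
Proof.
rewrite iterSr.
have := @iter_shift1 S Z tau k (zip_shift tau u) 0.
by rewrite add0n => ->.
Qed.

Theorem proposition2
  (X : Type) (dX : X -> X -> R) (f : X -> X)
  (S Z : finType) (tau : S -> Z) (phi : X -> zip_space S Z) :
  is_metric dX -> mcompact dX -> local_homeomorphism dX f ->
  (0 < #|S|)%N -> (0 < #|Z|)%N -> (#|Z| <= #|S|)%N ->
  (forall z : Z, exists s : S, tau s = z) ->
  homeomorphism dX (@zip_dist S Z) phi ->
  (forall x, phi (f x) = zip_shift tau (phi x)) ->
  expansive dX f.
Proof.
move=> [d0 [dE [dS dT]]] Hc _ _ _ _ _ [psi [Hpsi [_ [Hcont _]]]] Hconj.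
have Hiter : forall n x, phi (iter n f x) = iter n (zip_shift tau) (phi x).
  by elim=> [|n IH] x //=; rewrite Hconj IH.
(* Lebesgue-type lemma *)
have [E [EP HE]] : exists E, 0 < E /\ forall a b, dX a b < E ->
    (phi a).2 0%N = (phi b).2 0%N.
  pose I := { x : X & { d : R | 0 < d /\ forall y, dX x y < d ->
                (phi x).2 0%N = (phi y).2 0%N } }.
  pose U := fun (i : I) (y : X) => dX (projT1 i) y < proj1_sig (projT2 i) / 2.
  have Hop : forall i, mopen dX (U i).
    move=> i y Hy; exists (proj1_sig (projT2 i) / 2 - dX (projT1 i) y).
    split; first by rewrite /U in Hy; lra.
    move=> z Hz; rewrite /U; have := dT (projT1 i) y z; lra.
  have Hcov : forall x, exists i, U i x.
    move=> x.
    have [d [dP Hd]] := Hcont x Logic.I 1 Rlt_0_1.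
    have Hd' : forall y, dX x y < d -> (phi x).2 0%N = (phi y).2 0%N.
      by move=> y Hy; apply: zip_dist_lt1; apply: Hd; first exact: Logic.I.
    exists (existT _ x (exist _ d (conj dP Hd'))).
    rewrite /U /=; have := dE x x; move=> [_ ->] //; lra.
  have [l Hl] := Hc I U Hop Hcov.
  pose E := fold_right (fun i r => Rmin (proj1_sig (projT2 i) / 2) r) 1 l.
  have EP : 0 < E.
    rewrite /E; clear Hl E; elim: l => [|i l IH] /=; first lra.
    apply: Rmin_pos => //; case: (projT2 i) => d [dP _] /=; lra.
  have Ele : forall i, In i l -> E <= proj1_sig (projT2 i) / 2.
    rewrite /E; clear EP E Hl; elim: l => [|j l IH] i //= [<-|Hi].
    - apply: Rmin_l.
    - apply: Rle_trans (Rmin_r _ _) (IH _ Hi).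
  exists E; split => // a b Hab.
  have [i [Hi Hai]] := Hl a.
  have Hle := Ele i Hi.
  move: Hai; rewrite /U; case: i Hi Hle => x [d [dP Hd]] /= Hi Hle Hxa.
  have Hxb : dX x b < d by have := dT x a b; lra.
  by rewrite -(Hd a ltac:(lra)) -(Hd b Hxb).
have HE' : forall a b, (phi a).2 0%N <> (phi b).2 0%N -> dX a b >= E.
  move=> a b Hn; apply: Rnot_lt_ge => H; exact: Hn (HE a b H).
exists (E / 2); split; first lra.
move=> x y Hxy.
have Hphi : phi x <> phi y by move=> H; apply: Hxy; rewrite -(Hpsi x) H Hpsi.
have [[k Hk]|Hall2] := Classical_Prop.classic (exists k, (phi x).2 k <> (phi y).2 k).
  exists (Z.of_nat k); rewrite /iterate_dist_gt.
  have -> : (0 <=? Z.of_nat k)%Z = true by apply/Z.leb_le; lia.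
  rewrite Nat2Z.id.
  have := HE' (iter k f x) (iter k f y).
  rewrite !Hiter !iter_shift2 !add0n => H; have := H Hk; lra.
have [[k Hk]|Hall1] := Classical_Prop.classic (exists k, (phi x).1 k <> (phi y).1 k).
  exists (- Z.of_nat k.+1)%Z; rewrite /iterate_dist_gt.
  have -> : (0 <=? - Z.of_nat k.+1)%Z = false by apply/Z.leb_gt; lia.
  rewrite Z.opp_involutive Nat2Z.id.
  exists E; split; first lra.
  move=> a b Ha Hb; apply: HE' => H0; apply: Hk.
  by rewrite -Ha -Hb !Hiter !iter_shift_neg H0.
exfalso; apply: Hphi.
rewrite [phi x]surjective_pairing [phi y]surjective_pairing; f_equal.
- apply: functional_extensionality => k.
  by apply: Classical_Prop.NNPP => H; apply: Hall1; exists k.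
- apply: functional_extensionality => k.
  by apply: Classical_Prop.NNPP => H; apply: Hall2; exists k.
Qed.
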